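(* Let $G=(V,E)$ be a graph and $k\ge1$ an integer, and let $G_k$ be the graph obtained from $G$ by cloning every vertex exactly $k-1$ times. For a labeling $\mathbf{x}=(x_w)_{w\in V(G_k)}$ by indeterminates define the labeling $\mathbf{X}$ of $G$ by $X_a=(1+x_{a_1})(1+x_{a_2})\cdots(1+x_{a_k})-1$ for $a\in V$. Then $P(G_k;u,\mathbf{x})=P(G;u,\mathbf{X})$.
   Context: All graphs are finite and undirected, without multiple edges but possibly with self loops. For $A\subseteq V$, $G[A]$ is the induced subgraph; $rk(G)$ is the $\mathbb{F}_2$-rank of the adjacency matrix $(m_{ij})$ (with $m_{ij}=1$ iff $\{i,j\}\in E$, so $m_{ii}=1$ iff $i$ has a self loop; empty graph: rank $0$). For indeterminates $x_v$, $x_A=\prod_{v\in A}x_v$ and $P(G;u,\mathbf{x})=\sum_{A\subseteq V}x_Au^{rk(G[A])}$, with $0^0=1$. The graph $G_k$ (''each vertex cloned $k-1$ times'') has vertex set $\{a_i: a\in V,\ 1\le i\le k\}$; for distinct $a,b\in V$, $a_i$ and $b_j$ are adjacent iff $\{a,b\}\in E$; and $a_i,a_j$ are adjacent (for $i=j$: $a_i$ carries a self loop) iff $a$ carries a self loop in $G$. Equivalently, $G_k$ arises by repeatedly applying the single-vertex cloning operation (a new vertex $a'$ joined to all neighbours of $a$ other than $a$, plus the edge $\{a,a'\}$ and a self loop at $a'$ if $a$ has a self loop). *)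

(* Defs.v *)
From HB Require Import structures.
From mathcomp Require Import all_boot all_order all_algebra.
Set Implicit Arguments. Unset Strict Implicit. Unset Printing Implicit Defensive.
Import GRing.Theory.
Local Open Scope ring_scope.

(* A graph on a finite vertex type T is a symmetric relation e : rel T;
   e a a = true means a carries a self loop. *)

Definition ind_adjmx (T : finType) (e : rel T) (A : {set T}) : 'M['F_2]_#|A| :=
  \matrix_(i < #|A|, j < #|A|) ((e (enum_val i) (enum_val j))%:R : 'F_2).

Definition rk_ind (T : finType) (e : rel T) (A : {set T}) : nat :=
  \rank (ind_adjmx e A).

Definition interlaceP (R : comNzRingType) (T : finType) (e : rel T)
  (u : R) (x : T -> R) : R :=
  \sum_(A : {set T}) (\prod_(v in A) x v) * u ^+ rk_ind e A.

(* G_k : vertices (a, i) with a in V, i in 'I_k (a_{i+1} in the paper).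
   For a <> b: (a,i) ~ (b,j) iff {a,b} in E;  (a,i) ~ (a,j) (incl. i = j,
   a self loop) iff a has a self loop. *)
Definition clone_rel (T : finType) (k : nat) (e : rel T) : rel (T * 'I_k) :=
  fun p q => if p.1 == q.1 then e p.1 p.1 else e p.1 q.1.

Definition clone_label (R : comNzRingType) (T : finType) (k : nat)
  (x : T * 'I_k -> R) : T -> R :=
  fun a => \prod_(i < k) (1 + x (a, i)) - 1.

(* Main.v *)
Require Import Defs.
From HB Require Import structures.
From mathcomp Require Import all_boot all_order all_algebra.
Set Implicit Arguments. Unset Strict Implicit. Unset Printing Implicit Defensive.
Import GRing.Theory.
Local Open Scope ring_scope.

Lemma rank_rowsub_surj (F : fieldType) m n p (f : 'I_n -> 'I_m) (g : 'I_m -> 'I_n)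
  (fg : cancel g f) (A : 'M[F]_(m, p)) : \rank (rowsub f A) = \rank A.
Proof.
apply/eqP; rewrite eqn_leq mxrankS ?rowsub_sub //=.
apply: mxrankS; apply/row_subP => i; apply/(eq_row_sub (g i)).
by rewrite row_rowsub fg.
Qed.

Lemma rank_mxsub_surj (F : fieldType) m n (f : 'I_n -> 'I_m) (g : 'I_m -> 'I_n)
  (fg : cancel g f) (A : 'M[F]_m) : \rank (mxsub f f A) = \rank A.
Proof.
have -> : mxsub f f A = (rowsub f (rowsub f A)^T)^T.
  by apply/matrixP => i j; rewrite !mxE.
by rewrite mxrank_tr (rank_rowsub_surj fg) mxrank_tr (rank_rowsub_surj fg).
Qed.

Lemma clone_relE (T : finType) k (e : rel T) p q : @clone_rel T k e p q = e p.1 q.1.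
Proof. by rewrite /clone_rel; case: eqP => [->|]. Qed.

Lemma rk_clone (T : finType) k (e : rel T) (B : {set T * 'I_k}) :
  rk_ind (@clone_rel T k e) B = rk_ind e [set p.1 | p in B].
Proof.
have [->|[p0 p0B]] := set_0Vmem B.
  rewrite imset0 /rk_ind.
  have r0 (T' : finType) (r : rel T') : \rank (ind_adjmx r set0) = 0%N.
    by apply/eqP; rewrite -leqn0; apply: leq_trans (rank_leq_row _) _; rewrite cards0.
  by rewrite !r0.
set A := [set p.1 | p in B].
have a0 : p0.1 \in A by apply: imset_f.
pose h (i : 'I_#|B|) := enum_rank_in a0 (enum_val i).1.
pose q (j : 'I_#|A|) := odflt p0 [pick p in B | p.1 == enum_val j].
have qB j : q j \in B /\ (q j).1 = enum_val j.
  rewrite /q; case: pickP => [p /andP[pB /eqP]//|H] /=.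
  have : enum_val j \in A by apply: enum_valP.
  by case/imsetP => p pB Ep; have := H p; rewrite pB Ep eqxx.
pose g (j : 'I_#|A|) := enum_rank_in p0B (q j).
have fg : cancel g h.
  move=> j; rewrite /h /g enum_rankK_in; last by case: (qB j).
  by case: (qB j) => _ ->; rewrite enum_valK_in.
rewrite /rk_ind -(rank_mxsub_surj fg); congr (\rank _).
apply/matrixP => i j; rewrite !mxE clone_relE /h !enum_rankK_in //;
  by apply: imset_f; apply: enum_valP.
Qed.

Section Main.
Variables (R : comNzRingType) (T : finType) (e : rel T) (k : nat) (u : R)
  (x : T * 'I_k -> R).

Definition setof (f : {ffun T -> {set 'I_k}}) : {set T * 'I_k} :=
  [set p | p.2 \in f p.1].
Definition funof (B : {set T * 'I_k}) : {ffun T -> {set 'I_k}} :=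
  [ffun a => [set i | (a, i) \in B]].
Definition supp (f : {ffun T -> {set 'I_k}}) : {set T} := [set a | f a != set0].
Definition w a (S : {set 'I_k}) : R := \prod_(i in S) x (a, i).

Lemma setofK : cancel setof funof.
Proof. by move=> f; apply/ffunP => a; rewrite ffunE; apply/setP => i; rewrite !inE. Qed.
Lemma funofK : cancel funof setof.
Proof. by move=> B; apply/setP => -[a i]; rewrite !inE ffunE inE. Qed.

Lemma proj_setof f : [set p.1 | p in setof f] = supp f.
Proof.
apply/setP => a; rewrite inE; apply/imsetP/set0Pn.
  by case=> -[b i]; rewrite inE /= => Hi ->; exists i.
by case=> i Hi; exists (a, i); rewrite ?inE.
Qed.

Lemma prod_setof f : \prod_(p in setof f) x p = \prod_a w a (f a).
Proof.
rewrite /w pair_big_dep /=; apply: eq_big => -[a i] //; by rewrite inE.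
Qed.

Lemma X_expand a : clone_label x a = \sum_(S : {set 'I_k} | S != set0) w a S.
Proof.
rewrite /clone_label (eq_bigr (fun i => x (a, i) + 1)) => [|i _]; last by rewrite addrC.
rewrite bigA_distr (bigD1 set0) //= addrC.
have -> : \prod_i (if i \in set0 then x (a, i) else 1) = 1 :> R.
  by apply: big1 => i _; rewrite in_set0.
rewrite addKr; apply: eq_bigr => S _; rewrite /w big_mkcond.
by rewrite [RHS]big_mkcond.
Qed.

Lemma main : interlaceP (@clone_rel T k e) u x = interlaceP e u (clone_label x).
Proof.
rewrite /interlaceP (reindex setof); last by exists funof => ? _; [apply: setofK|apply: funofK].
under eq_bigr => f _ do rewrite rk_clone proj_setof prod_setof.
rewrite (partition_big supp predT) //=.
apply: eq_bigr => A _.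
rewrite (eq_bigr _ (fun a _ => X_expand a)) (big_distr_big_dep set0) /= mulr_suml.
apply: eq_big => f.
  apply/eqP/familyP => [<- a | H].
    case: ifPn => Ha; rewrite ?inE; move: Ha; rewrite ?unfold_in /=.
      by move=> Ha; have := (Ha : a \in supp f); rewrite inE.
    by move=> Ha; have := (Ha : a \notin supp f); rewrite inE negbK.
  apply/setP => a; rewrite inE; have := H a.
  case: ifPn => Ha; rewrite !inE; move: Ha; rewrite !unfold_in /= => Ha //.
  by move=> /eqP ->; rewrite eqxx.
move/eqP => <-.
suff -> : \prod_a w a (f a) = \prod_(a in supp f) w a (f a) by [].
rewrite [LHS](bigID (fun a => a \in supp f)) /= [X in _ * X]big1 ?mulr1 // => a.
by rewrite inE negbK => /eqP ->; rewrite /w big_set0.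
Qed.
End Main.

Theorem mainTheorem3 (R : comNzRingType) (T : finType) (e : rel T)
  (e_sym : symmetric e) (k : nat) (k_pos : (0 < k)%N)
  (u : R) (x : T * 'I_k -> R) :
  interlaceP (@clone_rel T k e) u x = interlaceP e u (clone_label x).
Proof. exact: main. Qed.
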